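(* Let $\mathsf E$ be a non-trivial observable on $\mathcal H_S$. No $\mathsf E$-instrument implemented by a measurement scheme constrained by the third law is repeatable.
   Context: All Hilbert spaces are finite-dimensional and complex. A state is a positive operator of unit trace; it is full-rank if it is positive definite. A channel is a completely positive trace-preserving linear map. A channel is constrained by the third law if it maps every full-rank state on its input space to a full-rank state on its output space. Let $2\le\dim\mathcal H_S<\infty$. An observable is a finite family $\mathsf E=\{\mathsf E_x\}_{x\in\mathcal X}$ of nonzero operators with $0\le\mathsf E_x\le\mathbb 1$ and $\sum_x\mathsf E_x=\mathbb 1$. It is non-trivial if some $\mathsf E_x$ is not a multiple of $\mathbb 1$. An $\mathsf E$-instrument is a family $\{\mathcal I_x\}_{x\in\mathcal X}$ of completely positive maps on $\mathcal L(\mathcal H_S)$ with $\mathrm{tr}[\mathcal I_x(\rho)]=\mathrm{tr}[\mathsf E_x\rho]$ for all $x$ and all states $\rho$. A measurement scheme $(\mathcal H_A,\xi,\mathcal E,\mathsf Z)$ consists of: - a finite-dimensional $\mathcal H_A$; - a state $\xi$ on $\mathcal H_A$; - a channel $\mathcal E$ on $\mathcal L(\mathcal H_S\otimes\mathcal H_A)$; - positive operators $\{\mathsf Z_x\}_{x\in\mathcal X}$ on $\mathcal H_A$ summing to $\mathbb 1$. It implements $\mathcal I_x(\rho)=\mathrm{tr}_A[(\mathbb 1\otimes\mathsf Z_x)\mathcal E(\rho\otimes\xi)]$. It is constrained by the third law if $\xi$ is full-rank and $\mathcal E$ is constrained by the third law. An $\mathsf E$-instrument is repeatable if $\mathrm{tr}[\mathsf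 E_y\mathcal I_x(\rho)]=\delta_{x,y}\mathrm{tr}[\mathsf E_x\rho]$ for all outcomes $x,y$ and all states $\rho$. *)

(* Defs.v *)
(* Complex scalars: an arbitrary numClosedFieldType C
   (e.g. algC, or R[i] for R : rcfType / realType). *)
From HB Require Import structures.
From mathcomp Require Import all_boot all_order all_algebra.
From mathcomp Require Export mxtens.
Set Implicit Arguments. Unset Strict Implicit. Unset Printing Implicit Defensive.
Import Order.TTheory GRing.Theory Num.Theory.
Local Open Scope ring_scope.

Section QDefs.
Variable C : numClosedFieldType.

Definition qform (n : nat) (A : 'M[C]_n) (v : 'cV[C]_n) : C :=
  ((map_mx Num.conj v^T) *m A *m v) 0 0.

Definition psd (n : nat) (A : 'M[C]_n) : Prop := forall v, 0 <= qform A v.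

Definition pd (n : nat) (A : 'M[C]_n) : Prop :=
  forall v, v != 0 -> 0 < qform A v.

Definition is_state (n : nat) (rho : 'M[C]_n) : Prop := psd rho /\ \tr rho = 1.

Definition full_rank_state (n : nat) (rho : 'M[C]_n) : Prop :=
  is_state rho /\ pd rho.

(* Kronecker/tensor index conventions come from mxtens:
   H_1 (x) H_2 = C^(n1 * n2), with index (i,j) |-> i * n2 + j. *)

(* ampliation id_k (x) Phi *)
Definition ampl (k n p : nat) (Phi : 'M[C]_n -> 'M[C]_p) (Y : 'M[C]_(k * n))
  : 'M[C]_(k * p) :=
  \matrix_(i, j)
    Phi (\matrix_(a, b) Y (mxtens_index ((mxtens_unindex i).1, a))
                          (mxtens_index ((mxtens_unindex j).1, b)))
        (mxtens_unindex i).2 (mxtens_unindex j).2.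

Definition completely_positive (n p : nat) (Phi : 'M[C]_n -> 'M[C]_p) : Prop :=
  forall (k : nat) (Y : 'M[C]_(k * n)), psd Y -> psd (ampl Phi Y).

Definition trace_preserving (n p : nat) (Phi : 'M[C]_n -> 'M[C]_p) : Prop :=
  forall Y, \tr (Phi Y) = \tr Y.

(* channel: completely positive trace-preserving linear map
   (linearity is carried by the {linear _ -> _} type at use sites) *)
Definition is_channel (n p : nat) (Phi : 'M[C]_n -> 'M[C]_p) : Prop :=
  completely_positive Phi /\ trace_preserving Phi.

Definition third_law_channel (n p : nat) (Phi : 'M[C]_n -> 'M[C]_p) : Prop :=
  is_channel Phi /\ forall rho, full_rank_state rho -> full_rank_state (Phi rho).

Definition observable (n : nat) (X : finType) (E : X -> 'M[C]_n) : Prop :=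
  (forall x, E x != 0 /\ psd (E x) /\ psd (1%:M - E x)) /\ \sum_x E x = 1%:M.

Definition nontrivial_obs (n : nat) (X : finType) (E : X -> 'M[C]_n) : Prop :=
  exists x, forall c : C, E x != c%:M.

Definition instrument (n : nat) (X : finType) (E : X -> 'M[C]_n)
  (I : X -> 'M[C]_n -> 'M[C]_n) : Prop :=
  forall x, completely_positive (I x) /\
    forall rho, is_state rho -> \tr (I x rho) = \tr (E x *m rho).

(* partial trace over the second (apparatus) factor *)
Definition ptrA (n m : nat) (Y : 'M[C]_(n * m)) : 'M[C]_n :=
  \matrix_(i, j) \sum_(a < m) Y (mxtens_index (i, a)) (mxtens_index (j, a)).

Definition meas_scheme (n m : nat) (X : finType) (xi : 'M[C]_m)
  (Ech : 'M[C]_(n * m) -> 'M[C]_(n * m)) (Z : X -> 'M[C]_m) : Prop :=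
  is_state xi /\ is_channel Ech /\ (forall x, psd (Z x)) /\ \sum_x Z x = 1%:M.

Definition scheme_third_law (n m : nat) (xi : 'M[C]_m)
  (Ech : 'M[C]_(n * m) -> 'M[C]_(n * m)) : Prop :=
  full_rank_state xi /\ third_law_channel Ech.

Definition implements (n m : nat) (X : finType) (I : X -> 'M[C]_n -> 'M[C]_n)
  (xi : 'M[C]_m) (Ech : 'M[C]_(n * m) -> 'M[C]_(n * m)) (Z : X -> 'M[C]_m) : Prop :=
  forall x rho, is_state rho ->
    I x rho = ptrA ((1%:M *t Z x) *m Ech (rho *t xi)).

Definition repeatable (n : nat) (X : finType) (E : X -> 'M[C]_n)
  (I : X -> 'M[C]_n -> 'M[C]_n) : Prop :=
  forall x y rho, is_state rho ->
    \tr (E y *m I x rho) = (x == y)%:R * \tr (E x *m rho).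

End QDefs.

(* Main.v *)
Require Import Defs.
From HB Require Import structures.
From mathcomp Require Import all_boot all_order all_algebra.
From mathcomp Require Import mxtens sesquilinear spectral.
From mathcomp Require Import ring.
Import Order.TTheory GRing.Theory Num.Theory.
Set Implicit Arguments. Unset Strict Implicit. Unset Printing Implicit Defensive.
Local Open Scope ring_scope.

Section H.
Variable C : numClosedFieldType.

Definition adj m n (K : 'M[C]_(m, n)) : 'M[C]_(n, m) := map_mx Num.conj (trmx K).

Lemma adjK m n (K : 'M[C]_(m, n)) : adj (adj K) = K.
Proof. by apply/matrixP=> i j; rewrite !mxE conjCK. Qed.

Lemma adj_mul m n p (A : 'M[C]_(m, n)) (B : 'M[C]_(n, p)) : adj (A *m B) = adj B *m adj A.
Proof. by rewrite /adj trmx_mul map_mxM. Qed.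

Lemma adj_tens m n p q (A : 'M[C]_(m, n)) (B : 'M[C]_(p, q)) : adj (A *t B) = adj A *t adj B.
Proof. by rewrite /adj trmx_tens map_mxT. Qed.

Lemma sum_tens n m (F : 'I_(n * m) -> C) :
  \sum_(k < n * m) F k = \sum_(i < n) \sum_(a < m) F (mxtens_index (i, a)).
Proof.
rewrite pair_big /=.
rewrite (reindex (@mxtens_index n m)) /=; last first.
  by exists (@mxtens_unindex n m) => k _; rewrite (mxtens_indexK, mxtens_unindexK).
by apply: eq_bigr => -[i a].
Qed.

Lemma mxtrace_tens n m (A : 'M[C]_n) (B : 'M[C]_m) : \tr (A *t B) = \tr A * \tr B.
Proof. by rewrite /mxtrace mulr_sum; apply: eq_bigr => k _; rewrite mxE. Qed.

Lemma tr_ptrA n m (E : 'M[C]_n) (M : 'M[C]_(n * m)) :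
  \tr (E *m ptrA M) = \tr ((E *t 1%:M) *m M).
Proof.
rewrite /mxtrace sum_tens.
apply: eq_bigr => i _; rewrite mxE.
under eq_bigr => j _ do rewrite mxE mulr_sumr.
rewrite exchange_big /=.
apply: eq_bigr => a _; rewrite mxE sum_tens.
apply: eq_bigr => j _.
rewrite (bigD1 a) //= big1 ?addr0; last first.
  by move=> b /negbTE ba; rewrite tensmxE mxE eq_sym ba mulr0 mul0r.
by rewrite tensmxE mxE eqxx mulr1.
Qed.

Lemma sum_pos (I : finType) (F : I -> C) i0 :
  (forall i, 0 <= F i) -> 0 < F i0 -> 0 < \sum_i F i.
Proof.
move=> F0 Fi0; rewrite (bigD1 i0) //=.
by apply: ltr_wpDr => //; apply: sumr_ge0.
Qed.

Lemma qformE N (A : 'M[C]_N) v : qform A v = (adj v *m A *m v) 0 0.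
Proof. by []. Qed.

Lemma pd_ge0 N (A : 'M[C]_N) : pd A -> forall v, 0 <= qform A v.
Proof.
move=> pA v; have [->|vn0] := eqVneq v 0; last by apply/ltW/pA.
by rewrite qformE mulmx0 mxE.
Qed.

Lemma adj_row p N (K : 'M[C]_(p, N)) r : adj (row r K) = col r (adj K).
Proof. by apply/matrixP=> i j; rewrite !mxE. Qed.

Lemma tr_pos p N (K : 'M[C]_(p, N)) (S : 'M[C]_N) :
  pd S -> K != 0 -> 0 < \tr (adj K *m K *m S).
Proof.
move=> pS Kn0.
rewrite -mulmxA mxtrace_mulC.
have Eq : forall r, (K *m S *m adj K) r r = qform S (adj (row r K)).
  move=> r; rewrite qformE adjK adj_row -row_mul colE mulmxA -colE.
  by rewrite !mxE; apply: eq_bigr => j _; rewrite [row _ _ _ _]mxE.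
have [r [c Hrc]] : exists r c, K r c != 0.
  case: (boolP [exists r, [exists c, K r c != 0]]) => [/existsP[r /existsP[c H]]|]; first by exists r, c.
  rewrite negb_exists => /forallP H; move/eqP: Kn0; case; apply/matrixP=> i j.
  by move: (H i); rewrite negb_exists => /forallP /(_ j); rewrite negbK mxE => /eqP.
rewrite /mxtrace; apply: (sum_pos (i0:=r)).
  by move=> i; rewrite Eq; apply: pd_ge0.
rewrite Eq; apply: pS; apply/negP => /eqP /matrixP /(_ c 0).
rewrite !mxE => /eqP; rewrite conjC_eq0; apply/negP; exact: Hrc.
Qed.

Definition bform N (A : 'M[C]_N) (u v : 'cV[C]_N) : C := (adj u *m A *m v) 0 0.

Lemma adjDZ N (u v : 'cV[C]_N) c : adj (u + c *: v) = adj u + c^* *: adj v.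
Proof. by apply/matrixP=> i j; rewrite !mxE rmorphD rmorphM. Qed.

Lemma qform_expand N (A : 'M[C]_N) u v c :
  qform A (u + c *: v) =
  qform A u + c * bform A u v + c^* * bform A v u + c^* * c * qform A v.
Proof.
rewrite !qformE /bform adjDZ !(mulmxDl, mulmxDr) -!scalemxAl -!scalemxAr !mxE.
by ring.
Qed.

Lemma psd_real N (A : 'M[C]_N) v : psd A -> (qform A v)^* = qform A v.
Proof. by move=> pA; apply/CrealP/ger0_real/pA. Qed.

Lemma aux_lin (a d s t s' t' i: C) :
 a + 1 * s' + 1 * t' + 1 * 1 * d = a + 1 * s + 1 * t + 1 * 1 * d ->
 a + - i * s' + i * t' + i * - i * d = a + i * s + - i * t + - i * i * d ->
 i * i = -1 -> 2 * t = 2 * s'.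
Proof.
move=> h1 h2 e2.
apply/eqP; rewrite -subr_eq0.
have -> : 2 * t - 2 * s' = -(((a + 1 * s' + 1 * t' + 1 * 1 * d) - (a + 1 * s + 1 * t + 1 * 1 * d)) + i*((a + - i * s' + i * t' + i * - i * d) -
    (a + i * s + - i * t + - i * i * d))) by ring: e2.
by rewrite h1 h2 !subrr mulr0 addr0 oppr0.
Qed.

Lemma psd_bform N (A : 'M[C]_N) u v : psd A -> bform A v u = (bform A u v)^*.
Proof.
move=> pA.
have h1 := psd_real (u + 1 *: v) pA.
have h2 := psd_real (u + 'i *: v) pA.
rewrite !qform_expand !rmorphD !rmorphM /= !psd_real // !conjCK rmorph1 in h1 h2.
rewrite conjCi in h2.
move: (qform A u) (qform A v) (bform A u v) (bform A v u) h1 h2 => a d s t h1 h2.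
have e2 : 'i * 'i = -1 :> C by rewrite -expr2 sqrCi.
have := aux_lin h1 h2 e2.
by apply: mulfI; rewrite pnatr_eq0.
Qed.

Lemma bform_delta N (A : 'M[C]_N) i j : bform A (delta_mx i 0) (delta_mx j 0) = A i j.
Proof.
rewrite /bform.
have -> : adj (delta_mx i 0 : 'cV[C]_N) = delta_mx 0 i.
  by apply/matrixP=> a b; rewrite !mxE conjC_nat andbC.
by rewrite -rowE -colE !mxE.
Qed.

Lemma psd_herm N (A : 'M[C]_N) : psd A -> adj A = A.
Proof.
move=> pA; apply/matrixP=> i j.
by rewrite !mxE -!bform_delta (psd_bform _ _ pA) conjCK.
Qed.

Lemma psd_factor N (A : 'M[C]_N) : psd A -> exists B : 'M[C]_N, A = adj B *m B.
Proof.
move=> pA.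
have hA : map_mx Num.conj (trmx A) = A := psd_herm pA.
have nA : A \is normalmx by apply/normalmxP; rewrite hA.
have HA := orthomx_spectralP nA.
set P := spectralmx A in HA; set d := spectral_diag A in HA.
have uP : P \is unitarymx := spectral_unitarymx A.
have iP : invmx P = adj P := invmx_unitary uP.
have PPt : P *m adj P = 1%:M := unitarymxP uP.
rewrite iP in HA.
have d0 : forall k, 0 <= d 0 k.
  move=> k; have := pA (adj P *m delta_mx k 0).
  rewrite qformE adj_mul adjK {1}HA !mulmxA.
  rewrite -(mulmxA (adj (delta_mx k 0)) P (adj P)) PPt mulmx1.
  rewrite -(mulmxA (_ *m diag_mx d) P (adj P)) PPt mulmx1.
  by rewrite -/(bform _ _ _) bform_delta mxE eqxx mulr1n.
set D' := diag_mx (map_mx sqrtC d).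
have hD : adj D' *m D' = diag_mx d.
  apply/matrixP => i j; rewrite /adj /D' tr_diag_mx map_diag_mx mul_diag_mx !mxE.
  have [->|ij] := eqVneq i j; last by rewrite !mulr0n mulr0.
  rewrite !mulr1n /=; have r0 : 0 <= sqrtC (d 0 j) by rewrite sqrtC_ge0.
  by rewrite (CrealP (ger0_real r0)) -expr2 sqrtCK.
exists (D' *m P); rewrite adj_mul -mulmxA (mulmxA (adj D')) hD mulmxA.
exact: HA.
Qed.

Lemma qform_sum N (A : 'M[C]_N) v :
  qform A v = \sum_k \sum_l (v k 0)^* * A k l * v l 0.
Proof.
rewrite qformE mxE exchange_big /=; apply: eq_bigr => k _.
rewrite mxE mulr_suml; apply: eq_bigr => l _.
by rewrite !mxE.
Qed.

Lemma nz_entry p q (K : 'M[C]_(p, q)) : K != 0 -> exists r c, K r c != 0.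
Proof.
move=> Kn0.
case: (boolP [exists r, [exists c, K r c != 0]]) => [/existsP[r /existsP[c H]]|]; first by exists r, c.
rewrite negb_exists => /forallP H; move/eqP: Kn0; case; apply/matrixP=> i j.
by move: (H i); rewrite negb_exists => /forallP /(_ j); rewrite negbK mxE => /eqP.
Qed.

Lemma sum_single (I : finType) (F : I -> C) i0 :
  (forall j, j != i0 -> F j = 0) -> \sum_j F j = F i0.
Proof. by move=> H; rewrite (bigD1 i0) //= big1 ?addr0. Qed.

Lemma pd_tens n m (c : C) (xi : 'M[C]_m) : 0 < c -> pd xi -> pd ((c%:M : 'M[C]_n) *t xi).
Proof.
move=> c0 pxi v vn0.
pose w i : 'cV[C]_m := \col_a v (mxtens_index (i, a)) 0.
have -> : qform (c%:M *t xi) v = c * \sum_i qform xi (w i).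
  rewrite qform_sum sum_tens mulr_sumr; apply: eq_bigr => i _.
  rewrite qform_sum mulr_sumr; apply: eq_bigr => a _.
  rewrite sum_tens (sum_single (i0:=i)); last first.
    move=> j ji; rewrite big1 // => b _.
    by rewrite tensmxE mxE eq_sym (negbTE ji) mulr0n mul0r mulr0 mul0r.
  rewrite mulr_sumr; apply: eq_bigr => b _.
  by rewrite tensmxE !mxE eqxx mulr1n; ring.
have [k [z /negP vk]] := nz_entry vn0.
case: (mxtens_indexP k) vk => i a vk.
apply: mulr_gt0 => //; apply: (sum_pos (i0:=i)).
  by move=> j; apply: pd_ge0.
apply: pxi; apply/negP => /eqP /matrixP /(_ a 0); rewrite !mxE => h.
by apply: vk; rewrite [z]ord1 h.
Qed.

Lemma psd_scalar N (c : C) : 0 <= c -> psd (c%:M : 'M[C]_N).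
Proof.
move=> c0 v; rewrite qform_sum; apply: sumr_ge0 => k _.
rewrite (sum_single (i0:=k)); last by move=> l lk; rewrite mxE eq_sym (negbTE lk) mulr0n mulr0 mul0r.
by rewrite mxE eqxx mulr1n (mulrC _ c) -mulrA; apply: mulr_ge0 => //; rewrite mulrC mul_conjC_ge0.
Qed.

Lemma pd_psd N (A : 'M[C]_N) : pd A -> psd A.
Proof. exact: pd_ge0. Qed.

Lemma tens_nz p q r s (B : 'M[C]_(p, q)) (G : 'M[C]_(r, s)) : B != 0 -> G != 0 -> B *t G != 0.
Proof.
move=> /nz_entry [i [j Bij]] /nz_entry [k [l Gkl]].
apply/negP => /eqP /matrixP /(_ (mxtens_index (i, k)) (mxtens_index (j, l))).
by rewrite tensmxE mxE => /eqP; rewrite mulf_eq0 (negbTE Bij) (negbTE Gkl).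
Qed.

End H.

Unset Implicit Arguments.

Theorem theorem3 (C : numClosedFieldType) (n : nat) (X : finType)
  (E : X -> 'M[C]_n) :
  (2 <= n)%N -> observable E -> nontrivial_obs E ->
  forall (I : X -> {linear 'M[C]_n -> 'M[C]_n}),
  instrument E (fun x => I x) ->
  forall (m : nat) (xi : 'M[C]_m) (Ech : {linear 'M[C]_(n * m) -> 'M[C]_(n * m)})
         (Z : X -> 'M[C]_m),
  meas_scheme xi Ech Z -> scheme_third_law xi Ech ->
  implements (fun x => I x) xi Ech Z ->
  ~ repeatable E (fun x => I x).
Proof.
move=> n2 [Eprop sumE] [x0 Hx0] I _ m xi Ech Z [stxi [_ [Zpsd sumZ]]]
  [[_ pdxi] [_ frE]] impl rep.
have [x Zx] : exists x, Z x != 0.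
  case: (boolP [exists x, Z x != 0]) => [/existsP[x H]|]; first by exists x.
  rewrite negb_exists => /forallP H; exfalso.
  have : \tr xi = 0.
    rewrite -[xi]mulmx1 -sumZ big1 ?mulmx0 ?mxtrace0 // => y _.
    by apply/eqP; rewrite -[_ == _]negbK H.
  by rewrite stxi.2 => /eqP; rewrite oner_eq0.
have [y yx] : exists y, y != x.
  case: (boolP [exists y, y != x]) => [/existsP[y H]|]; first by exists y.
  rewrite negb_exists => /forallP H; exfalso.
  have Hy : forall y, y = x by move=> y; apply/eqP; rewrite -[_ == _]negbK H.
  rewrite (bigD1 x) //= big1 ?addr0 in sumE; last by move=> z; rewrite (Hy z) eqxx.
  by move: (Hx0 1); rewrite (Hy x0) sumE eqxx.
have n0 : (n%:R : C) != 0 by rewrite pnatr_eq0 -lt0n; apply: leq_trans n2.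
have c0 : 0 < (n%:R : C)^-1 by rewrite invr_gt0 ltr0n; apply: leq_trans n2.
pose rho : 'M[C]_n := ((n%:R : C)^-1)%:M.
have strho : is_state rho.
  split; first by apply: psd_scalar; apply: ltW.
  by rewrite mxtrace_scalar -[_ *+ n]mulr_natr mulVf.
have frt : full_rank_state (rho *t xi).
  have pdt : pd (rho *t xi) by apply: pd_tens.
  split=> //; split; first exact: pd_psd.
  by rewrite mxtrace_tens strho.2 stxi.2 mulr1.
have [_ pdS] := frE _ frt.
have := rep x y rho strho.
have xy : (x == y) = false by rewrite eq_sym (negbTE yx).
rewrite xy mul0r /= impl // tr_ptrA mulmxA tensmx_mul mulmx1 mul1mx.
have [B HB] := psd_factor (Eprop y).2.1.
have [G HG] := psd_factor (Zpsd x).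
rewrite HB HG -tensmx_mul -adj_tens => h.
have Bn0 : B != 0.
  by apply/negP => /eqP B0; move: (Eprop y).1; rewrite HB B0 mulmx0 eqxx.
have Gn0 : G != 0.
  by apply/negP => /eqP G0; move: Zx; rewrite HG G0 mulmx0 eqxx.
have := tr_pos pdS (tens_nz Bn0 Gn0).
by rewrite h ltxx.
Qed.
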